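(* Let $i=\sqrt{-1}$, let $\alpha>0$, and let $\lambda\in\mathbb C$ satisfy $\Im\lambda\notin\{\alpha,-\alpha\}$. Define $u_0=\alpha i+\lambda$, $w_0=\alpha i-\lambda$, and for $h=0,1,\dots$ $$u_{h+1}=\tfrac12\left(u_h-1/u_h\right),\qquad w_{h+1}=\tfrac12\left(w_h-1/w_h\right).$$ Then all $u_h,w_h$ are well defined and nonzero, and $$\lim_{h\to\infty}(u_h+w_h)=\begin{cases}2i,& |\Im\lambda|<\alpha,\\ 0,& |\Im\lambda|>\alpha.\end{cases}$$ *)

(* Defs.v *)
From Stdlib Require Import Reals.
Open Scope R_scope.

Definition Cplx : Type := (R * R)%type.
Definition Re (z : Cplx) : R := fst z.
Definition Im (z : Cplx) : R := snd z.
Definition C0 : Cplx := (0, 0).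
Definition C1 : Cplx := (1, 0).
Definition Ci : Cplx := (0, 1).
Definition RtoC (r : R) : Cplx := (r, 0).
Definition Cadd (z w : Cplx) : Cplx := (Re z + Re w, Im z + Im w).
Definition Copp (z : Cplx) : Cplx := (- Re z, - Im z).
Definition Csub (z w : Cplx) : Cplx := Cadd z (Copp w).
Definition Cmul (z w : Cplx) : Cplx :=
  (Re z * Re w - Im z * Im w, Re z * Im w + Im z * Re w).
(* usual complex inverse; total (gives 0 at 0 since Rinv 0 = 0) *)
Definition Cinv (z : Cplx) : Cplx :=
  (Re z / (Re z ^ 2 + Im z ^ 2), - Im z / (Re z ^ 2 + Im z ^ 2)).
Definition Cdiv (z w : Cplx) : Cplx := Cmul z (Cinv w).
Definition Cmod (z : Cplx) : R := sqrt (Re z ^ 2 + Im z ^ 2).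

Definition Ccv (s : nat -> Cplx) (l : Cplx) : Prop :=
  forall eps : R, eps > 0 ->
    exists N : nat, forall n : nat, (n >= N)%nat -> Cmod (Csub (s n) l) < eps.

Definition step (z : Cplx) : Cplx := Cmul (RtoC (/ 2)) (Csub z (Cinv z)).
Fixpoint iter_seq (z0 : Cplx) (h : nat) : Cplx :=
  match h with
  | O => z0
  | S h' => step (iter_seq z0 h')
  end.

Definition u_seq (alpha : R) (lam : Cplx) : nat -> Cplx :=
  iter_seq (Cadd (Cmul (RtoC alpha) Ci) lam).
Definition w_seq (alpha : R) (lam : Cplx) : nat -> Cplx :=
  iter_seq (Csub (Cmul (RtoC alpha) Ci) lam).

(* Main.v *)
Require Import Defs.
From Stdlib Require Import Reals Lra Psatz.
Open Scope R_scope.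
Definition Af (s : R) (z : Cplx) := Re z ^ 2 + (Im z - s) ^ 2.
Definition Bf (s : R) (z : Cplx) := Re z ^ 2 + (Im z + s) ^ 2.

Lemma d_nz x y : y <> 0 -> x ^ 2 + y ^ 2 <> 0.
Proof. intros. assert (0 < y*y) by (apply Rsqr_pos_lt; auto). nra. Qed.

Lemma key_A z s : (s = 1 \/ s = -1) -> Im z <> 0 ->
  Af s (step z) * (4 * (Re z ^ 2 + Im z ^ 2)) = (Af s z) ^ 2.
Proof. destruct z as [x y]; unfold Af, step, Cmul, Csub, Cadd, Copp, Cinv, RtoC, Re, Im; simpl.
intros [-> | ->] Hy; field; assert (0 < y*y) by (apply Rsqr_pos_lt; auto); nra. Qed.
Lemma key_B z s : (s = 1 \/ s = -1) -> Im z <> 0 ->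
  Bf s (step z) * (4 * (Re z ^ 2 + Im z ^ 2)) = (Bf s z) ^ 2.
Proof. destruct z as [x y]; unfold Bf, step, Cmul, Csub, Cadd, Copp, Cinv, RtoC, Re, Im; simpl.
intros [-> | ->] Hy; field; assert (0 < y*y) by (apply Rsqr_pos_lt; auto); nra. Qed.
Lemma step_Im z : Im z <> 0 -> Im (step z) = Im z * (Re z ^2 + Im z ^2 + 1) / (2 * (Re z ^2 + Im z ^2)).
Proof. destruct z as [x y]. unfold step, Cmul, Csub, Cadd, Copp, Cinv, RtoC, Re, Im; simpl.
intros Hy. field. assert (0 < y*y) by (apply Rsqr_pos_lt; auto); nra. Qed.

Lemma sign_step z s : (s = 1 \/ s = -1) -> s * Im z > 0 -> s * Im (step z) > 0.
Proof. intros Hs H. assert (Hy : Im z <> 0) by (intro E; rewrite E in H; lra).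
rewrite step_Im; auto. set (x := Re z) in *; set (y := Im z) in *.
assert (0 < y*y) by (apply Rsqr_pos_lt; auto).
assert (Hd : 0 < x^2 + y^2) by nra.
replace (s * (y * (x ^ 2 + y ^ 2 + 1) / (2 * (x ^ 2 + y ^ 2))))
  with ((s*y) * ((x ^ 2 + y ^ 2 + 1) / (2 * (x ^ 2 + y ^ 2)))) by (field; lra).
apply Rmult_lt_0_compat; auto. apply Rdiv_lt_0_compat; lra. Qed.

Lemma sign_iter z0 s : (s = 1 \/ s = -1) -> s * Im z0 > 0 -> forall n, s * Im (iter_seq z0 n) > 0.
Proof. intros Hs H n; induction n; simpl; auto. apply sign_step; auto. Qed.

Lemma B_pos z s : (s = 1 \/ s = -1) -> s * Im z > 0 -> 0 < Bf s z.
Proof. unfold Bf. intros [-> | ->] H; assert (0 <= Re z ^2) by (apply pow2_ge_0); nra. Qed.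

Lemma A_lt_B z s : (s = 1 \/ s = -1) -> s * Im z > 0 -> Af s z < Bf s z.
Proof. unfold Af, Bf. intros [-> | ->] H; nra. Qed.

Lemma ratio_step z s : (s = 1 \/ s = -1) -> s * Im z > 0 ->
  Af s (step z) / Bf s (step z) = (Af s z / Bf s z) ^ 2.
Proof. intros Hs H. assert (Hy : Im z <> 0) by (intro E; rewrite E in H; lra).
assert (0 < Im z * Im z) by (apply Rsqr_pos_lt; auto).
assert (Hd : 0 < Re z^2 + Im z^2) by nra.
assert (HB := B_pos z s Hs H).
assert (HB' := B_pos (step z) s Hs (sign_step z s Hs H)).
assert (E1 : Af s (step z) = (Af s z)^2 / (4 * (Re z^2 + Im z^2))).
{ rewrite <- (key_A z s Hs Hy). field. lra. }
assert (E2 : Bf s (step z) = (Bf s z)^2 / (4 * (Re z^2 + Im z^2))).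
{ rewrite <- (key_B z s Hs Hy). field. lra. }
rewrite E1, E2. field. split; lra. Qed.
Lemma B_le z s : (s = 1 \/ s = -1) -> Bf s z <= 2 * Af s z + 8.
Proof. unfold Af, Bf. intros [-> | ->]; pose proof (pow2_ge_0 (Re z)); pose proof (pow2_ge_0 (Im z - 3)); pose proof (pow2_ge_0 (Im z + 3)); nra. Qed.

Lemma conv z0 s : (s = 1 \/ s = -1) -> s * Im z0 > 0 ->
  forall eps, eps > 0 -> exists N : nat, forall n, (n >= N)%nat -> Af s (iter_seq z0 n) < eps.
Proof. intros Hs H eps Heps.
set (f n := Af s (iter_seq z0 n) / Bf s (iter_seq z0 n)).
set (f0 := f O).
assert (HBn : forall n, 0 < Bf s (iter_seq z0 n)) by (intro n; apply B_pos; auto; apply sign_iter; auto).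
assert (HAn : forall n, 0 <= Af s (iter_seq z0 n)) by (intro n; unfold Af; apply Rplus_le_le_0_compat; apply pow2_ge_0).
assert (HAB : forall n, Af s (iter_seq z0 n) < Bf s (iter_seq z0 n)) by (intro n; apply A_lt_B; auto; apply sign_iter; auto).
assert (Hf : forall n, 0 <= f n < 1).
{ intro n; unfold f; pose proof (HBn n); pose proof (HAn n); pose proof (HAB n); split.
  unfold Rdiv; apply Rmult_le_pos; auto; left; apply Rinv_0_lt_compat; auto.
  apply Rmult_lt_reg_r with (Bf s (iter_seq z0 n)); auto. unfold Rdiv. rewrite Rmult_assoc, Rinv_l, Rmult_1_r, Rmult_1_l; lra. }
assert (Hrec : forall n, f (S n) = f n ^ 2).
{ intro n; unfold f; simpl iter_seq. apply ratio_step; auto. apply sign_iter; auto. }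
assert (Hind : forall n, f n <= f0 /\ f n <= f0 ^ (S n)).
{ induction n. unfold f0; simpl; split; lra.
  rewrite Hrec. destruct IHn as [I1 I2]. pose proof (Hf n). pose proof (Hf O). fold f0 in H1.
  replace (f0 ^ S (S n)) with (f0 ^ S n * f0) by (simpl; ring).
  assert (E : f n ^ 2 = f n * f n) by ring; rewrite E; split; nra. }
set (e' := Rmin (1/4) (eps / 16)).
assert (He' : 0 < e') by (unfold e'; apply Rmin_pos; lra).
assert (Hf0 : Rabs f0 < 1) by (pose proof (Hf O); rewrite Rabs_pos_eq; unfold f0; lra).
destruct (pow_lt_1_zero f0 Hf0 e' He') as [N HN].
exists N. intros n Hn.
assert (Hfn : f n < e').
{ destruct (Hind n) as [_ I]. pose proof (HN (S n) ltac:(lia)). pose proof (Rle_abs (f0 ^ S n)). lra. }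
assert (e'1 : e' <= 1/4) by apply Rmin_l.
assert (e'2 : e' <= eps/16) by apply Rmin_r.
assert (EA : Af s (iter_seq z0 n) = f n * Bf s (iter_seq z0 n)).
{ unfold f. field. apply Rgt_not_eq, HBn. }
assert (HB8 : Bf s (iter_seq z0 n) <= 2 * Af s (iter_seq z0 n) + 8).
{ apply B_le; auto. }
pose proof (Hf n). nra.
Qed.
Lemma sum_bound z w s1 s2 eps : eps > 0 -> Af s1 z < eps^2/4 -> Af s2 w < eps^2/4 ->
  Cmod (Csub (Cadd z w) (0, s1 + s2)) < eps.
Proof. destruct z as [x1 y1], w as [x2 y2]. unfold Af, Cmod, Csub, Cadd, Copp, Re, Im; simpl.
intros He H1 H2. rewrite <- (sqrt_pow2 eps) by lra. apply sqrt_lt_1_alt. split.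
- pose proof (pow2_ge_0 (x1 + x2 + - 0)); pose proof (pow2_ge_0 (y1 + y2 + - (s1 + s2))); lra.
- pose proof (pow2_ge_0 (x1 - x2)); pose proof (pow2_ge_0 ((y1 - s1) - (y2 - s2))). nra.
Qed.

Lemma sgn z0 : Im z0 <> 0 -> exists s, (s = 1 \/ s = -1) /\ s * Im z0 > 0.
Proof. intros H. destruct (Rlt_or_le 0 (Im z0)).
exists 1; split; [left; auto | lra]. exists (-1); split; [right; auto | lra]. Qed.

Lemma nz z0 : Im z0 <> 0 -> forall h, iter_seq z0 h <> C0.
Proof. intros H h E. destruct (sgn z0 H) as [s [Hs Hp]].
pose proof (sign_iter z0 s Hs Hp h). rewrite E in H0. unfold C0, Im in H0; simpl in H0. lra. Qed.

Lemma conv2 z0 w0 s1 s2 : (s1 = 1 \/ s1 = -1) -> s1 * Im z0 > 0 -> (s2 = 1 \/ s2 = -1) -> s2 * Im w0 > 0 ->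
  Ccv (fun h => Cadd (iter_seq z0 h) (iter_seq w0 h)) (0, s1 + s2).
Proof. intros H1 P1 H2 P2 eps He.
assert (He2 : eps^2/4 > 0) by (pose proof (pow_lt eps 2 He); lra).
destruct (conv z0 s1 H1 P1 _ He2) as [N1 HN1].
destruct (conv w0 s2 H2 P2 _ He2) as [N2 HN2].
exists (Nat.max N1 N2). intros n Hn. apply sum_bound; auto. apply HN1; lia. apply HN2; lia. Qed.

Theorem mainTheorem5 (alpha : R) (lam : Cplx) :
  0 < alpha -> Im lam <> alpha -> Im lam <> - alpha ->
  (forall h : nat, u_seq alpha lam h <> C0 /\ w_seq alpha lam h <> C0) /\
  (Rabs (Im lam) < alpha ->
     Ccv (fun h => Cadd (u_seq alpha lam h) (w_seq alpha lam h))
         (Cmul (RtoC 2) Ci)) /\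
  (alpha < Rabs (Im lam) ->
     Ccv (fun h => Cadd (u_seq alpha lam h) (w_seq alpha lam h)) C0).
Proof. intros Ha H1 H2.
assert (Eu : Im (Cadd (Cmul (RtoC alpha) Ci) lam) = alpha + Im lam) by (destruct lam; unfold Csub, Cadd, Copp, Cmul, RtoC, Ci, Re, Im; simpl; ring) || (unfold Im, Cadd, Cmul, RtoC, Ci, Re; simpl; ring).
assert (Ew : Im (Csub (Cmul (RtoC alpha) Ci) lam) = alpha - Im lam) by (destruct lam; unfold Csub, Cadd, Copp, Cmul, RtoC, Ci, Re, Im; simpl; ring) || (unfold Im, Csub, Cadd, Copp, Cmul, RtoC, Ci, Re; simpl; ring).
unfold u_seq, w_seq. split; [|split].
- intro h. split; apply nz; [rewrite Eu | rewrite Ew]; intro; lra.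
- intro Hl. replace (Cmul (RtoC 2) Ci) with (0, 1 + 1) by (unfold Cmul, RtoC, Ci, Re, Im; simpl; f_equal; ring).
  apply Rabs_def2 in Hl. apply conv2; auto; [rewrite Eu | rewrite Ew]; lra.
- intro Hl. replace C0 with (0, 1 + -1) by (unfold C0; f_equal; ring).
  destruct (Rlt_or_le 0 (Im lam)) as [P|P].
  + rewrite Rabs_pos_eq in Hl by lra. apply conv2; auto; [rewrite Eu | rewrite Ew]; lra.
  + rewrite Rabs_left1 in Hl by lra.
    replace (0, 1 + -1) with (0, -1 + 1) by (f_equal; ring).
    apply conv2; auto; [rewrite Eu | rewrite Ew]; lra.
Qed.
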